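(* Let $q\ge2$, $G\in\mathbb G^q$, $S=\Psi(G)$, and let $i\neq j$ in $\{1,\dots,q\}$. Let $S_{ij}$ be the subgraph of $S$ consisting of all edges of colors $i$ and $j$ together with their endpoints. If $S_{ij}$ is a forest, then for every color-$0$ edge of $G$, its two endpoints belong to the same color-$ij$ cycle of $G$ (i.e. the same connected component of the subgraph of $G$ formed by the edges of colors $i$ and $j$).
   Context: Fix an integer $q\ge 2$. A $(q+1)$-edge-colored graph (colored graph) is a finite connected graph, multiple edges allowed and no loops, whose edges carry colors in $\{0,1,\dots,q\}$ such that every vertex is incident to exactly one edge of each color. It is rooted if one color-0 edge is distinguished and oriented; it is bipartite if its vertices can be colored black and white so that every edge joins a black and a white vertex, with the convention that the origin of the root edge is black. $\mathbb G^q$ denotes the set of rooted bipartite colored graphs. Constellations: given $G\in\mathbb G^q$, its constellation $S=\Psi(G)$ is obtained as follows: orient every edge from its black to its white endpoint; contract every color-0 edge into a single vertex, called a white vertex of $S$. For each $i\in\{1,\dots,q\}$ the color-$i$ edges now form directed cycles; for each such cycle, passing through white vertices $w_1,\dots,w_p$ in this cyclic order, add a new vertex of color $i$ joined by one color-$i$ edge to each $w_k$, equip the new vertex with the cyclic order $(w_1,\dots,w_p)$ of its incident edges, and delete the original color-$i$ edges of the cycle. *)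

(* Defs.v *)
From HB Require Import structures.
From mathcomp Require Import all_boot.
Set Implicit Arguments. Unset Strict Implicit. Unset Printing Implicit Defensive.

(* A (q+1)-edge-colored graph with vertex set V (a finType) is encoded by
   [sigma : 'I_q.+1 -> V -> V]: [sigma c v] is the other endpoint of the unique
   color-c edge at v.  Multiple
   edges (of distinct colors) are allowed; the absence of loops is
   [sigma c v != v]; [sigma c] is an involution. *)

Definition adjG (q : nat) (V : finType) (sigma : 'I_q.+1 -> V -> V) : rel V :=
  fun x y => [exists c : 'I_q.+1, y == sigma c x].

Definition colored_graph (q : nat) (V : finType) (sigma : 'I_q.+1 -> V -> V) : Prop :=
  [/\ forall c v, sigma c (sigma c v) = v,
      forall c v, sigma c v != v &
      forall u v, connect (adjG sigma) u v].

(* rooted bipartite colored graph: root edge = the color-0 edge {r, sigma 0 r}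
   oriented from r; [black] is the bipartition, with the root origin black. *)
Definition rooted_bipartite_colored_graph (q : nat) (V : finType)
  (sigma : 'I_q.+1 -> V -> V) (black : pred V) (r : V) : Prop :=
  [/\ colored_graph sigma,
      forall c v, black (sigma c v) = ~~ black v &
      black r].

(* ---- The constellation S = Psi(G) ----
   White vertices of S = color-0 edges of G; each is represented by its
   (unique) black endpoint b.  The color-i edge of G leaving black b goes to the
   white vertex sigma i b, which lies on the color-0 edge whose black endpoint is
   sigma 0 (sigma i b).  So after contraction the color-i edges define the
   successor map below on white vertices of S; its cycles are the color-i
   vertices of S. *)
Definition cst_succ (q : nat) (V : finType) (sigma : 'I_q.+1 -> V -> V)
  (i : 'I_q.+1) : V -> V := fun v => sigma ord0 (sigma i v).

Definition cst_cycle (q : nat) (V : finType) (sigma : 'I_q.+1 -> V -> V)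
  (i : 'I_q.+1) (b : V) : {set V} :=
  [set b' | fconnect (cst_succ sigma i) b b'].

(* Vertices of S: [inl b] is the white vertex (black representative b),
   [inr (c, C)] is the color-c vertex associated with the cycle C. *)
Definition cst_vertex (q : nat) (V : finType) := (V + ('I_q.+1 * {set V}))%type.

Definition cst_edge_col (q : nat) (V : finType) (sigma : 'I_q.+1 -> V -> V)
  (black : pred V) (c : 'I_q.+1) (b : V) (C : {set V}) : bool :=
  [&& black b, c != ord0 & C == cst_cycle sigma c b].

Definition Sij_rel (q : nat) (V : finType) (sigma : 'I_q.+1 -> V -> V)
  (black : pred V) (i j : 'I_q.+1) : rel (cst_vertex q V) :=
  fun x y =>
    match x, y with
    | inl b, inr (c, C) | inr (c, C), inl b =>
        ((c == i) || (c == j)) && cst_edge_col sigma black c b C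
    | _, _ => false
    end.

(* a cycle in a simple graph given by a symmetric relation: at least 3
   distinct vertices, consecutive ones (cyclically) adjacent *)
Definition has_cycle (T : eqType) (e : rel T) : Prop :=
  exists s : seq T, [/\ 2 < size s, uniq s & cycle e s].

Definition is_forest (T : eqType) (e : rel T) : Prop := ~ has_cycle e.

Definition Gij_rel (q : nat) (V : finType) (sigma : 'I_q.+1 -> V -> V)
  (i j : 'I_q.+1) : rel V :=
  fun x y => (y == sigma i x) || (y == sigma j x).

(* Main.v *)
Require Import Defs.
From HB Require Import structures.
From mathcomp Require Import all_boot.

Theorem mainTheorem18 (q : nat) (V : finType) (sigma : 'I_q.+1 -> V -> V)
  (black : pred V) (r : V) (i j : 'I_q.+1) :
  2 <= q ->
  rooted_bipartite_colored_graph sigma black r ->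
  i != ord0 -> j != ord0 -> i != j ->
  is_forest (Sij_rel sigma black i j) ->
  forall v : V, connect (Gij_rel sigma i j) v (sigma ord0 v).
Proof.
move=> _ [[invol noloop _] bflip _] ni0 nj0 nij forest.
have sinj c : injective (sigma c) := can_inj (invol c).
pose tau := fun y => sigma j (sigma i y).
have tinj : injective tau by move=> y z /sinj /sinj.
have ainj c : injective (cst_succ sigma c) by move=> y z /sinj /sinj.
have cycS c y : cst_cycle sigma c (cst_succ sigma c y) = cst_cycle sigma c y.
  by apply/setP=> z; rewrite !inE -same_fconnect1.
have Eq c x y : (y == sigma c x) = (x == sigma c y).
  by apply/eqP/eqP => ->; rewrite invol.
have Gsym : symmetric (Gij_rel sigma i j).
  by move=> x y; rewrite /Gij_rel Eq (Eq j).
have key : forall x, black x -> fconnect tau x (cst_succ sigma i x).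
  move=> x bx; case: (boolP (fconnect tau x (cst_succ sigma i x))) => // Hno.
  exfalso; apply: forest.
  set e := cst_succ sigma i x in Hno *.
  have bit k : black (iter k tau x).
    by elim: k => //= k IH; rewrite !bflip negbK.
  have be : black e by rewrite /e /cst_succ !bflip negbK.
  have noe k : iter k tau x != e.
    by apply/negP => /eqP H; move: Hno; rewrite -H fconnect_iter.
  pose E' := fun a b : cst_vertex q V =>
    [&& Sij_rel sigma black i j a b, a != inl e & b != inl e].
  pose A : cst_vertex q V := inr (i, cst_cycle sigma i e).
  pose B : cst_vertex q V := inr (j, cst_cycle sigma j e).
  have Pex : exists k, (0 < k) && (iter k tau x == x).
    by exists (order tau x); rewrite order_gt0 (iter_order tinj) eqxx.
  case: (find_ex_minn Pex) => n /andP [n0 /eqP tn] nmin.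
  have succj_tau y : cst_succ sigma j (tau y) = cst_succ sigma i y.
    by rewrite /cst_succ /tau invol.
  have inlE z : (@inl V ('I_q.+1 * {set V})%type z != inl e) = (z != e).
    by apply/negbLR; rewrite negbK; apply/eqP/eqP => [[]|->].
  have claim : forall k, 0 < k -> k <= n -> connect E' B (inl (iter k tau x)).
    elim=> // k IH _ kn.
    case k0: (k == 0).
      move/eqP: k0 => ->; apply: connect1.
      rewrite /E' /= eqxx orbT /cst_edge_col (bit 1) nj0 -(cycS j (tau x)) succj_tau eqxx /=.
      by rewrite inlE (noe 1).
    have k0' : 0 < k by rewrite lt0n k0.
    have := IH k0' (ltnW kn).
    set y := iter k tau x => Hy.
    have ay : cst_succ sigma i y != e.
      rewrite /e (inj_eq (ainj i)); apply/eqP => yx.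
      have : n <= k by apply: nmin; rewrite k0' -/y yx eqxx.
      by rewrite leqNgt kn.
    have by' : black y := bit k.
    have bay : black (cst_succ sigma i y) by rewrite /cst_succ !bflip negbK.
    apply: (connect_trans Hy).
    apply: (connect_trans (connect1 (y := inr (i, cst_cycle sigma i y)) _)).
      by rewrite /E' /= eqxx /cst_edge_col by' ni0 eqxx inlE (noe k).
    apply: (connect_trans (connect1 (y := inl (cst_succ sigma i y)) _)).
      by rewrite /E' /= eqxx /cst_edge_col bay ni0 cycS eqxx inlE ay.
    apply: (connect_trans (connect1 (y := inr (j, cst_cycle sigma j (cst_succ sigma i y))) _)).
      by rewrite /E' /= eqxx orbT /cst_edge_col bay nj0 eqxx inlE ay.
    apply: connect1.
    rewrite /E' /= eqxx orbT /cst_edge_col (bit k.+1) nj0 -succj_tau cycS eqxx.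
    by rewrite inlE (noe k.+1).
  have HBA : connect E' B A.
    apply: (connect_trans (claim n n0 (leqnn n))); rewrite tn; apply: connect1.
    rewrite /E' /= eqxx /cst_edge_col bx ni0 cycS eqxx /= andbT.
    by rewrite inlE (noe 0).
  case/connectP: HBA => p pth lst.
  move: lst; case: (shortenP pth) => p' pth' uq' _ lst.
  have noinl : forall s a, path E' a s -> inl e \notin s.
    elim=> // z s IH a /= /andP [/and3P [_ _ ze] pz].
    by rewrite in_cons negb_or eq_sym ze (IH z pz).
  exists (inl e :: B :: p'); split.
  - case: p' pth' uq' lst {noinl} => [|z p''] //= _ _ [] /eqP.
    by move=> ji; move: nij; rewrite ji.
  - by rewrite cons_uniq uq' andbT in_cons negb_or /= (noinl _ _ pth').
  - rewrite /= rcons_path (sub_path _ pth'); last by move=> a b /and3P [].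
    rewrite -lst /A /Sij_rel /cst_edge_col /= !eqxx ?orbT be nj0 ni0.
    by [].
have tG y : connect (Gij_rel sigma i j) y (tau y).
  apply: (connect_trans (connect1 (y := sigma i y) _)); first by rewrite /Gij_rel eqxx.
  by apply: connect1; rewrite /Gij_rel /tau eqxx orbT.
have fG x y : fconnect tau x y -> connect (Gij_rel sigma i j) x y.
  by apply: connect_sub => a b /eqP <-; exact: tG.
have blk v : black v -> connect (Gij_rel sigma i j) v (sigma ord0 v).
  move=> bv; set x := sigma i (sigma ord0 v).
  have bx : black x by rewrite /x !bflip bv.
  have ax : cst_succ sigma i x = v by rewrite /cst_succ /x !invol.
  have := fG _ _ (key x bx); rewrite ax (sym_connect_sym Gsym) => Hxv.
  by apply: (connect_trans Hxv (connect1 _)); rewrite /Gij_rel /x invol eqxx.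
move=> v; case bv: (black v); first exact: blk.
have : black (sigma ord0 v) by rewrite bflip bv.
by move/blk; rewrite invol (sym_connect_sym Gsym).
Qed.
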